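(* Let $\mathcal S\subset\mathbb Z^2$ be a finite step set with weights $(\omega_s)_{s\in\mathcal S}$, let $t_c>0$, and let $\rho>0$ be irrational. Let $q:\mathbb N^2\times\mathbb N\to\mathbb C$, $(x,n)\mapsto q(x;n)$, extended by $q(y;n)=0$ for $y\notin\mathbb N^2$, satisfy $$q(x;n+1)=\sum_{s\in\mathcal S}\omega_s\,q(x-s;n)\qquad\text{for all }x\in\mathbb N^2,\ n\ge0,$$ and suppose there are functions $v_{k,\ell,m}:\mathbb N^2\to\mathbb C$ (integers $k\ge1$, $\ell\ge m\ge0$) such that for every $p>0$ and every $x\in\mathbb N^2$, $$q(x;n)=t_c^{-n}\sum_{\substack{k\ge1,\ \ell\ge m\ge0\\ k\rho+\ell+1<p}}v_{k,\ell,m}(x)\frac{(\log n)^m}{n^{k\rho+\ell+1}}+\mathcal O\!\left(t_c^{-n}\left(\frac{\log n}{n}\right)^p\right)\quad(n\to\infty).$$ Then each $v_{k,\ell,m}$ is $t_c$-polyharmonic of order $\ell-m+1$, i.e. $\Delta^{\ell-m+1}v_{k,\ell,m}\equiv0$ on $\mathbb N^2$.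
   Context: $\Delta$ acts on functions $w:\mathbb N^2\to\mathbb C$ by $(\Delta w)(A)=\sum_{s\in\mathcal S}\omega_s\,w(A-s)-t_c^{-1}w(A)$ for $A\in\mathbb N^2$, with the convention $w(B)=0$ for $B\notin\mathbb N^2$; $\Delta^r$ is the $r$-fold iterate of this operator. *)

(* Defs.v *)
From HB Require Import structures.
From mathcomp Require Import all_boot all_order all_algebra.
From mathcomp Require Import complex.
From mathcomp Require Import all_classical all_reals all_analysis.
Set Implicit Arguments. Unset Strict Implicit. Unset Printing Implicit Defensive.
Import Order.TTheory GRing.Theory Num.Theory ComplexField.
Local Open Scope ring_scope.
Local Open Scope complex_scope.

Definition step := (int * int)%type.

Definition ext0 {R : rcfType} (w : nat -> nat -> R[i]) (a b : int) : R[i] :=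
  if (0 <= a) && (0 <= b) then w `|a|%N `|b|%N else 0.

Definition Delta {R : rcfType} (S : seq step) (omega : step -> R) (tc : R)
  (w : nat -> nat -> R[i]) : nat -> nat -> R[i] :=
  fun a b => \sum_(s <- S) (omega s)%:C * ext0 w (a%:Z - s.1) (b%:Z - s.2)
             - (tc^-1)%:C * w a b.

Definition Delta_iter {R : rcfType} (S : seq step) (omega : step -> R) (tc : R)
  (r : nat) (w : nat -> nat -> R[i]) : nat -> nat -> R[i] :=
  iter r (Delta S omega tc) w.

(* The index range is finite; K = truncn (p + p/rho) + 1 exceeds every
   admissible k and l, so the filtered sum over k,l < K is the full sum. *)
Definition asym_sum {R : realType} (rho p : R)
  (v : nat -> nat -> nat -> nat -> nat -> R[i]) (x1 x2 n : nat) : R[i] :=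
  let K := (Num.truncn (p + p / rho)).+1 in
  \sum_(k < K) \sum_(l < K) \sum_(m < l.+1 |
        (1 <= k)%N && (k%:R * rho + l%:R + 1 < p))
     v k l m x1 x2 *
     ((ln (n%:R : R)) ^+ m / (n%:R : R) `^ (k%:R * rho + l%:R + 1))%:C.

(* Main.v *)
Require Import Defs.
From HB Require Import structures.
From mathcomp Require Import all_boot all_order all_algebra.
From mathcomp Require Import complex.
From mathcomp Require Import all_classical all_reals all_analysis.
From mathcomp Require Import ring lra zify.
From Stdlib Require Import Lia.
Import Order.TTheory GRing.Theory Num.Theory ComplexField.
Set Implicit Arguments. Unset Strict Implicit. Unset Printing Implicit Defensive.
Local Open Scope ring_scope.
Section T.
Variable R : realType.

Definition TT (phi : nat -> R -> R) (x0 : R) (J : nat) (t : R) : R :=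
  \sum_(j < J) phi j x0 * (t - x0) ^+ j / j`!%:R.

Lemma is_derive_comp1 (f g : R -> R) (x df dg : R) :
  is_derive x 1 f df -> is_derive (f x) 1 g dg -> is_derive x 1 (g \o f) (dg * df).
Proof.
move=> hf hg.
have df1 : derivable f x 1 by case: hf.
have dg1 : derivable g (f x) 1 by case: hg.
apply: DeriveDef.
  apply/derivable1_diffP; apply: differentiable_comp; exact/derivable1_diffP.
rewrite -derive1E derive1_comp // !derive1E.
by rewrite (@derive_val _ _ _ _ _ _ _ hf) (@derive_val _ _ _ _ _ _ _ hg).
Qed.

Lemma TT_derive (phi : nat -> R -> R) (x0 : R) (J : nat) (t : R) :
  is_derive t 1 (TT phi x0 J.+1) (TT (fun j => phi j.+1) x0 J t).
Proof.
elim: J => [|J IH].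
  have -> : TT phi x0 1 = cst (phi 0%N x0).
    by apply/funext => s; rewrite /TT big_ord1 expr0 mulr1 fact0 divr1.
  by rewrite /TT big_ord0; apply: is_derive_cst.
have -> : TT phi x0 J.+2 = TT phi x0 J.+1 +
    (fun s => phi J.+1 x0 / J.+1`!%:R * (s - x0) ^+ J.+1).
  apply/funext => s; rewrite /TT big_ord_recr /= !fctE.
  by congr (_ + _); rewrite mulrAC.
rewrite [X in is_derive _ _ _ X]/TT big_ord_recr /=.
apply: is_deriveD.
set c := phi J.+1 x0 / J.+1`!%:R.
have -> : (fun s => c * (s - x0) ^+ J.+1) = (c *: ((@id R - cst x0) ^+ J.+1) : R -> R).
  by apply/funext => s; rewrite !fctE.
apply: is_derive_eq.
rewrite /= subr0 scaler1 /c factS natrM /GRing.scale /= !fctE /=.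
have h1 : (1 + J%:R : R) != 0 by rewrite addrC natr1 pnatr_eq0.
have h2 : (J`!%:R : R) != 0 by rewrite pnatr_eq0 -lt0n fact_gt0.
by field; rewrite h1 h2.
Qed.


Lemma TT_at0 (phi : nat -> R -> R) (x0 : R) (J : nat) :
  TT phi x0 J.+1 x0 = phi 0%N x0.
Proof.
rewrite /TT big_ord_recl /= expr0 fact0 divr1 mulr1 big1 ?addr0 //.
by move=> i _; rewrite subrr expr0n /= mulr0 mul0r.
Qed.

Lemma taylor_bound (J : nat) : forall (phi : nat -> R -> R) (x0 : R) (M : R),
  (forall j t, x0 <= t <= x0 + 1 -> is_derive t 1 (phi j) (phi j.+1 t)) ->
  (forall t, x0 <= t <= x0 + 1 -> `|phi J t| <= M) ->
  forall t, x0 <= t <= x0 + 1 -> `|phi 0%N t - TT phi x0 J t| <= M * (t - x0) ^+ J.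
Proof.
elim: J => [|J IH] phi x0 M hd hM t ht.
  by rewrite /TT big_ord0 subr0 expr0 mulr1; apply: hM.
have hx0 : x0 <= x0 <= x0 + 1 by rewrite lexx lerDl ler01.
have M0 : 0 <= M by apply: le_trans (hM _ hx0).
set psi := fun s => phi 0%N s - TT phi x0 J.+1 s.
set dpsi := fun s => phi 1%N s - TT (fun j => phi j.+1) x0 J s.
have hpsi : forall s, x0 <= s <= x0 + 1 -> is_derive s 1 psi (dpsi s).
  move=> s hs; rewrite /psi /dpsi.
  have h1 := hd 0%N s hs.
  have h2 := TT_derive phi x0 J s.
  have -> : (fun s0 => phi 0%N s0 - TT phi x0 J.+1 s0) = phi 0%N - TT phi x0 J.+1.
    by apply/funext => u; rewrite !fctE.
  exact: is_deriveB.
have hIH := IH (fun j => phi j.+1) x0 M (fun j => hd j.+1) hM.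
have [xt tx] : x0 <= t /\ t <= x0 + 1 by case/andP: ht.
have [c cin ceq] : exists2 c, c \in `[x0, t]%R & psi t - psi x0 = dpsi c * (t - x0).
  apply: MVT_segment => //.
    move=> u; rewrite in_itv /= => /andP[u1 u2]; apply: hpsi.
    by rewrite (ltW u1) /= (le_trans (ltW u2) tx).
  apply: derivable_within_continuous => u; rewrite in_itv /= => /andP[u1 u2].
  have hu : x0 <= u <= x0 + 1 by rewrite u1 /= (le_trans u2 tx).
  by case: (hpsi u hu).
have psi0 : psi x0 = 0 by rewrite /psi TT_at0 subrr.
move: ceq; rewrite psi0 subr0 /psi => ->.
move: cin; rewrite in_itv /= => /andP[c1 c2].
have hc : x0 <= c <= x0 + 1 by rewrite c1 /= (le_trans c2 tx).
rewrite normrM (@ger0_norm _ (t - x0)); last by rewrite subr_ge0.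
rewrite exprS mulrCA mulrC.
apply: ler_wpM2l; first by rewrite subr_ge0.
apply: le_trans (hIH c hc) _.
apply: ler_wpM2l => //; apply: lerXn2r; rewrite ?nnegrE ?subr_ge0 //.
by rewrite lerD2r.
Qed.

End T.
Section G.
Variable R : realType.

Definition g (b : R) (i n : nat) : R := (ln (n%:R : R)) ^+ i / (n%:R : R) `^ b.

Fixpoint Pj (a : R) (m j : nat) : {poly R} :=
  if j is j'.+1 then (Pj a m j')^`() - (a + j'%:R) *: Pj a m j' else 'X^m.

Definition phi (a : R) (m j : nat) (t : R) : R :=
  (Pj a m j).[ln t] * t `^ (- (a + j%:R)).

Lemma size_Pj (a : R) (m j : nat) : (size (Pj a m j) <= m.+1)%N.
Proof.
elim: j => [|j IH] /=; first by rewrite size_polyXn.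
apply: leq_trans (size_polyD _ _) _; rewrite geq_max; apply/andP; split.
  have [->|p0] := eqVneq (Pj a m j) 0; first by rewrite deriv0 size_poly0.
  exact: leq_trans (ltnW (lt_size_deriv p0)) IH.
by rewrite size_polyN; apply: leq_trans (size_scale_leq _ _) IH.
Qed.

Lemma phi_derive (a : R) (m j : nat) (t : R) : 0 < t -> is_derive t 1 (phi a m j) (phi a m j.+1 t).
Proof.
move=> t0.
have h1 : is_derive t 1 (horner (Pj a m j) \o @ln R) ((Pj a m j)^`().[ln t] * t^-1).
  exact: (is_derive_comp1 (is_derive1_ln t0) (is_derive_poly _ _)).
have h2 := is_derive1_powR (- (a + j%:R)) t0.
have -> : phi a m j = (horner (Pj a m j) \o @ln R) * ((@powR R)^~ (- (a + j%:R))).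
  by apply/funext => s; rewrite /phi !fctE.
apply: is_derive_eq.
have e1 : t `^ (- (a + j%:R)) * t^-1 = t `^ (- (a + j%:R) - 1).
  rewrite -powR_inv1 ?(ltW t0) // -powRD //.
  by rewrite (gt_eqF t0) implybT.
rewrite /phi /= hornerD hornerN hornerZ /GRing.scale /= -e1.
rewrite -natr1.
have -> : - (a + (j%:R + 1)) = - (a + j%:R) - 1 by rewrite addrA opprD.
rewrite -e1.
ring.
Qed.

Lemma horner_bound (P : {poly R}) (m : nat) (y : R) :
  (size P <= m.+1)%N -> 1 <= y ->
  `|P.[y]| <= (\sum_(i < size P) `|P`_i|) * y ^+ m.
Proof.
move=> hs y1; rewrite horner_coef mulr_suml.
apply: le_trans (ler_norm_sum _ _ _) _.
apply: ler_sum => i _; rewrite normrM normrX (ger0_norm (le_trans ler01 y1)).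
apply: ler_wpM2l => //; apply: ler_weXn2l => //.
by rewrite -ltnS; apply: leq_trans (ltn_ord i) hs.
Qed.


Definition N0 : nat := (Num.truncn (expR (1:R))).+2.

Lemma N0_ge2 : (2 <= N0)%N. Proof. by []. Qed.

Lemma ln_ge1 (n : nat) : (N0 <= n)%N -> 1 <= ln (n%:R : R).
Proof.
move=> hn.
have e1 : expR (1:R) <= n%:R.
  apply: le_trans (ltW (truncnS_gt _)) _; rewrite ler_nat.
  by apply: leq_trans hn; rewrite /N0.
rewrite -[leLHS](expRK 1) ler_ln ?posrE ?expR_gt0 //.
exact: lt_le_trans (expR_gt0 1) e1.
Qed.

Lemma ln_le2 (n : nat) : (2 <= n)%N -> ln (n.+1%:R : R) <= 2 * ln (n%:R : R).
Proof.
move=> hn.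
have n0 : (0 : R) < n%:R by rewrite ltr0n; apply: leq_trans hn.
rewrite mulr_natl -lnXn // ler_ln ?posrE ?ltr0n ?exprn_gt0 // -natrX ler_nat.
by rewrite -addn1 expnS; case: n hn {n0} => [|[|n]] //= _; rewrite mulSn; nia.
Qed.

Lemma bump0' (i : nat) : bump 0 i = i.+1. Proof. by []. Qed.

Definition cc (a : R) (m j i : nat) : R :=
  if (0 < j)%N && (i <= m)%N then (Pj a m j)`_i / j`!%:R else 0.

Lemma phi_expand (a : R) (m j M : nat) (n : nat) : (m < M)%N -> (0 < n)%N ->
  phi a m j n%:R / j`!%:R = \sum_(i < M) (Pj a m j)`_i / j`!%:R * g (a + j%:R) i n.
Proof.
move=> mM n0.
rewrite /phi (@horner_coef_wide _ M); last by apply: leq_trans (size_Pj a m j) mM.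
rewrite !mulr_suml; apply: eq_bigr => i _.
by rewrite /g powRN; ring.
Qed.

Lemma expand (a : R) (m J M : nat) : 0 <= a -> (m < M)%N ->
  exists C : R, forall n, (N0 <= n)%N ->
  `| g a m n.+1 - g a m n - \sum_(j < J.+1) \sum_(i < M) cc a m j i * g (a + j%:R) i n |
     <= C * g (a + J.+1%:R) m n.
Proof.
move=> a0 mM.
set P := Pj a m J.+1.
exists ((\sum_(i < size P) `|P`_i|) * 2 ^+ m) => n hn.
have n2 : (2 <= n)%N by apply: leq_trans hn.
have n0 : (0 : R) < n%:R by rewrite ltr0n; apply: leq_trans n2.
set x0 : R := n%:R.
have hd : forall j s, x0 <= s <= x0 + 1 -> is_derive s 1 (phi a m j) (phi a m j.+1 s).
  move=> j s /andP[s1 _]; apply: phi_derive; exact: lt_le_trans s1.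
have hM : forall s, x0 <= s <= x0 + 1 ->
    `|phi a m J.+1 s| <= (\sum_(i < size P) `|P`_i|) * 2 ^+ m * g (a + J.+1%:R) m n.
  move=> s /andP[s1 s2].
  have s0 : 0 < s by exact: lt_le_trans s1.
  have l1 : 1 <= ln s.
    apply: le_trans (ln_ge1 hn) _; rewrite ler_ln ?posrE //.
  have l2 : ln s <= 2 * ln x0.
    apply: le_trans (ln_le2 n2); rewrite ler_ln ?posrE ?ltr0n //.
    by rewrite -natr1.
  rewrite /phi normrM (ger0_norm (powR_ge0 _ _)).
  rewrite /g mulrA; apply: ler_pM.
  - exact: normr_ge0.
  - exact: powR_ge0.
  - apply: le_trans (horner_bound (size_Pj a m J.+1) l1) _.
    rewrite -/P -mulrA; apply: ler_wpM2l; first exact: sumr_ge0.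
    rewrite -exprMn; apply: lerXn2r; rewrite ?nnegrE //.
      exact: le_trans ler01 l1.
    by rewrite mulr_ge0 // ln_ge0 // ler1n; apply: leq_trans n2.
  - rewrite powRN.
    have b0 : 0 <= a + J.+1%:R by rewrite addr_ge0.
    rewrite lef_pV2 ?posrE ?powR_gt0 //.
    by apply: ge0_ler_powR => //; rewrite ?nnegrE ?(ltW n0) ?(ltW s0).
have ht : x0 <= x0 + 1 <= x0 + 1 by rewrite lexx lerDl ler01.
have := taylor_bound hd hM ht.
rewrite addrAC subrr add0r expr1n mulr1 natr1.
have -> : phi a m 0 n.+1%:R = g a m n.+1.
  by rewrite /phi /g /= hornerXn addr0 powRN.
have -> : TT (phi a m) x0 J.+1 n.+1%:R =
    g a m n + \sum_(j < J.+1) \sum_(i < M) cc a m j i * g (a + j%:R) i n.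
  rewrite /TT big_ord_recl [X in _ = _ + X]big_ord_recl /=.
  rewrite -natr1 /x0 addrAC subrr add0r expr0 fact0 divr1 mulr1.
  rewrite [X in _ = _ + (X + _)]big1 ?add0r; last by move=> i _; rewrite /cc /= mul0r.
  rewrite (_ : phi a m 0 n%:R = g a m n); last by rewrite /phi /g /= hornerXn addr0 powRN.
  congr (_ + _); apply: eq_bigr => j _; rewrite bump0'.
  rewrite expr1n mulr1 (@phi_expand a m j.+1 M n mM); last exact: leq_trans _ n2.
  apply: eq_bigr => i _; rewrite /cc /=.
  case: leqP => // hi; rewrite nth_default ?mul0r //.
  exact: leq_trans (size_Pj a m j.+1) hi.
by rewrite opprD addrA.
Qed.

End G.
Section S.
Variable R : realType.

Definition small (u : nat -> R) :=
  forall e : R, 0 < e -> exists N, forall n, (N <= n)%N -> u n <= e.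

Lemma small0 : small (fun _ => 0).
Proof. by move=> e e0; exists 0%N => n _; exact: ltW. Qed.

Lemma smallD u v : small u -> small v -> small (fun n => u n + v n).
Proof.
move=> hu hv e e0.
have e2 : 0 < e / 2 by rewrite divr_gt0.
have [N1 h1] := hu _ e2; have [N2 h2] := hv _ e2.
exists (maxn N1 N2) => n; rewrite geq_max => /andP[n1 n2].
by rewrite (splitr e); apply: lerD; [apply: h1|apply: h2].
Qed.

Lemma smallZ c u : 0 <= c -> small u -> small (fun n => c * u n).
Proof.
rewrite le_eqVlt => /orP[/eqP <-|c0] hu e e0.
  by exists 0%N => n _; rewrite mul0r ltW.
have [N h] := hu (e / c) (divr_gt0 e0 c0).
exists N => n hn; rewrite -ler_pdivlMl //.
by rewrite mulrC; apply: h.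
Qed.

Lemma small_le u v : (exists N, forall n, (N <= n)%N -> v n <= u n) -> small u -> small v.
Proof.
move=> [N hN] hu e e0; have [M hM] := hu e e0.
exists (maxn N M) => n; rewrite geq_max => /andP[n1 n2].
exact: le_trans (hN n n1) (hM n n2).
Qed.

Lemma small_sum (T : finType) (P : pred T) (f : T -> nat -> R) :
  (forall t, P t -> small (f t)) -> small (fun n => \sum_(t | P t) f t n).
Proof.
move=> hf; rewrite /index_enum; elim: (Finite.enum T) => [|x s IH].
  by apply: small_le small0; exists 0%N => n _; rewrite big_nil.
case Px: (P x).
  apply: small_le (smallD (hf x Px) IH); exists 0%N => n _.
  by rewrite big_cons Px.
by apply: small_le IH; exists 0%N => n _; rewrite big_cons Px.
Qed.

Lemma small_ge u c : small u -> (exists N, forall n, (N <= n)%N -> c <= u n) -> c <= 0.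
Proof.
move=> hu [N hN]; rewrite leNgt; apply/negP => c0.
have [M hM] := hu (c / 2) (divr_gt0 c0 (ltr0Sn _ 1)).
have := le_trans (hN (maxn N M) (leq_maxl _ _)) (hM _ (leq_maxr _ _)).
move=> h; lra.
Qed.

Lemma small_powN (e : R) : 0 < e -> small (fun n => (n%:R : R) `^ (- e)).
Proof.
move=> e0 eps eps0.
set X := (eps^-1) `^ (e^-1).
exists (Num.truncn X).+1 => n hn.
have Xn : X <= n%:R.
  apply: le_trans (ltW (truncnS_gt _)) _; by rewrite ler_nat.
have n0 : (0 : R) < n%:R.
  by apply: lt_le_trans Xn; rewrite powR_gt0 // invr_gt0.
have h : eps^-1 <= (n%:R : R) `^ e.
  have -> : eps^-1 = X `^ e.
    rewrite /X -powRrM mulVf ?gt_eqF // powRr1 // invr_ge0 ltW //.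
  by apply: ge0_ler_powR => //; rewrite ?nnegrE ?(ltW e0) ?(ltW n0) ?powR_ge0.
rewrite powRN -[leRHS]invrK lef_pV2 ?posrE ?invr_gt0 ?powR_gt0 //.
Qed.

Lemma small_lnV : small (fun n => (ln (n%:R : R))^-1).
Proof.
move=> eps eps0.
exists (Num.truncn (expR (eps^-1))).+1 => n hn.
have Xn : expR (eps^-1) < n%:R.
  apply: lt_le_trans (truncnS_gt _) _; by rewrite ler_nat.
have n0 : (0 : R) < n%:R by apply: lt_trans Xn; exact: expR_gt0.
have h : eps^-1 < ln (n%:R : R).
  by rewrite -[ltLHS]expRK ltr_ln ?posrE ?expR_gt0.
have l0 : 0 < ln (n%:R : R) by apply: lt_trans h; rewrite invr_gt0.
by rewrite -[leRHS]invrK lef_pV2 ?posrE ?invr_gt0 // ltW.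
Qed.

Lemma ln_powbound (d : R) (j : nat) (x : R) : 0 < d -> 1 <= x ->
  (ln x) ^+ j <= (2 * j%:R / d) ^+ j * x `^ (d / 2).
Proof.
move=> d0 x1.
have x0 : 0 < x by exact: lt_le_trans ltr01 x1.
case: j => [|j]; first by rewrite !expr0 mul1r -[leLHS](powRr0 x); apply: ler_powR => //; rewrite divr_ge0 // ltW.
set c := d / 2 / j.+1%:R.
have c0 : 0 < c by rewrite /c !divr_gt0.
have hl : ln x <= c^-1 * x `^ c.
  have -> : ln x = c^-1 * ln (x `^ c) by rewrite ln_powR mulrA mulVf ?gt_eqF // mul1r.
  apply: ler_wpM2l; first by rewrite invr_ge0 ltW.
  by apply: ltW; apply: ln_sublinear; rewrite powR_gt0.
have -> : x `^ (d / 2) = (x `^ c) ^+ j.+1.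
  by rewrite -powR_mulrn ?powR_ge0 // -powRrM /c mulfVK // pnatr_eq0.
rewrite -exprMn; apply: lerXn2r; rewrite ?nnegrE ?ln_ge0 //.
  by rewrite mulr_ge0 ?powR_ge0 // divr_ge0 // ltW.
apply: le_trans hl _; apply: ler_wpM2r; first exact: powR_ge0.
rewrite [leLHS](_ : _ = 2 * j.+1%:R / d) //; rewrite /c; field.
by rewrite (gt_eqF d0) /= addrC natr1 pnatr_eq0.
Qed.

Lemma small_lnpow (d : R) (j : nat) : 0 < d ->
  small (fun n => (ln (n%:R : R)) ^+ j / (n%:R : R) `^ d).
Proof.
move=> d0.
have K0 : 0 <= (2 * j%:R / d) ^+ j.
  by apply: exprn_ge0; rewrite divr_ge0 ?mulr_ge0 // ltW.
apply: small_le (smallZ K0 (small_powN (divr_gt0 d0 (ltr0Sn _ 1)))).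
exists 1%N => n hn.
have n1 : (1 : R) <= n%:R by rewrite ler1n.
have n0 : (0 : R) < n%:R by exact: lt_le_trans ltr01 n1.
rewrite ler_pdivrMr ?powR_gt0 //.
apply: le_trans (ln_powbound j d0 n1) _.
rewrite -[leRHS]mulrA; apply: ler_wpM2l => //.
rewrite -powRD; last by rewrite (gt_eqF n0) implybT.
have -> : - (d / 2) + d = d / 2 by field.
exact: lexx.
Qed.

Lemma g_gt0 (b : R) (i n : nat) : (N0 R <= n)%N -> 0 < g b i n.
Proof.
move=> hn; have l1 := ln_ge1 hn.
have n0 : (0 : R) < n%:R by rewrite ltr0n; apply: leq_trans hn.
by rewrite /g divr_gt0 ?powR_gt0 // exprn_gt0 // (lt_le_trans ltr01 l1).
Qed.

Lemma ratio1 (b b' : R) (i i' : nat) : b < b' ->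
  small (fun n => g b' i' n / g b i n).
Proof.
move=> bb.
have db : 0 < b' - b by rewrite subr_gt0.
apply: small_le (small_lnpow i' db).
exists (N0 R) => n hn.
have l1 := ln_ge1 hn.
have n0 : (0 : R) < n%:R by rewrite ltr0n; apply: leq_trans hn.
have lp : 0 < ln (n%:R : R) by exact: lt_le_trans ltr01 l1.
rewrite /g.
have -> : (n%:R : R) `^ b' = (n%:R) `^ (b' - b) * (n%:R) `^ b.
  by rewrite -powRD ?subrK // (gt_eqF n0) implybT.
have p1 : (n%:R : R) `^ (b' - b) != 0 by rewrite gt_eqF ?powR_gt0.
have p2 : (n%:R : R) `^ b != 0 by rewrite gt_eqF ?powR_gt0.
have p3 : ln (n%:R : R) ^+ i != 0 by rewrite gt_eqF ?exprn_gt0.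
have -> : ln (n%:R : R) ^+ i' / ((n%:R) `^ (b' - b) * (n%:R) `^ b) /
   (ln (n%:R : R) ^+ i / (n%:R) `^ b) =
   (ln (n%:R : R) ^+ i' / (n%:R) `^ (b' - b)) / ln (n%:R : R) ^+ i.
  by field; rewrite p1 p2 p3.
rewrite ler_pdivrMr ?exprn_gt0 //; apply: ler_peMr.
  by rewrite divr_ge0 ?powR_ge0 ?exprn_ge0 ?ltW.
by rewrite exprn_ege1.
Qed.

End S.
Section U.
Variable R : realType.

Lemma ratio2 (b : R) (i i' : nat) : (i' < i)%N ->
  small (fun n => g b i' n / g b i n).
Proof.
move=> ii.
apply: small_le (@small_lnV R).
exists (N0 R) => n hn.
have l1 := ln_ge1 hn.
have n0 : (0 : R) < n%:R by rewrite ltr0n; apply: leq_trans hn.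
have lp : 0 < ln (n%:R : R) by exact: lt_le_trans ltr01 l1.
have p2 : (n%:R : R) `^ b != 0 by rewrite gt_eqF ?powR_gt0.
have -> : g b i' n / g b i n = (ln (n%:R : R) ^+ (i - i'))^-1.
  have ei : i = ((i - i') + i')%N by rewrite subnK // ltnW.
  rewrite /g {1}ei exprD.
  have A0 : ln (n%:R : R) ^+ (i - i') != 0 by rewrite gt_eqF ?exprn_gt0.
  have B0 : ln (n%:R : R) ^+ i' != 0 by rewrite gt_eqF ?exprn_gt0.
  move: A0 B0 p2.
  set A := ln (n%:R : R) ^+ (i - i'); set B := ln (n%:R : R) ^+ i'.
  set p := (n%:R : R) `^ b => A0 B0 p2.
  by field; rewrite A0 B0 p2.
rewrite lef_pV2 ?posrE ?exprn_gt0 //.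
by rewrite -[leLHS]expr1; apply: ler_weXn2l => //; rewrite subn_gt0.
Qed.

Lemma uniq_real (T : finType) (bt : T -> R) (it : T -> nat) (F : T -> R)
    (P : nat) (C : R) (N : nat) :
  (forall t t', bt t = bt t' -> it t = it t' -> t = t') ->
  (forall n, (N <= n)%N ->
     `|\sum_t F t * g (bt t) (it t) n| <= C * g P%:R P n) ->
  forall t, bt t < P%:R -> F t = 0.
Proof.
move=> inj hS t0 ht0; apply/eqP/negPn/negP => hF0.
pose Z := [pred t | (F t != 0) && (bt t < P%:R)].
have Zt0 : Z t0 by rewrite /= hF0 ht0.
case: (@arg_minP _ _ T t0 Z bt Zt0) => t1 Zt1 min1.
pose Z' := [pred t | Z t && (bt t == bt t1)].
have Z't1 : Z' t1 by apply/andP; split; [exact: Zt1|exact: eqxx].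
case: (@arg_maxP _ _ T t1 Z' it Z't1) => t2 /andP[Zt2 /eqP e2] max2.
have claim : forall t, t != t2 -> F t != 0 ->
    small (fun n => g (bt t) (it t) n / g (bt t2) (it t2) n).
  move=> t tt2 Ft.
  case: (ltP (bt t) P%:R) => hP; last first.
    apply: ratio1; apply: lt_le_trans hP; by case/andP: Zt2.
  have Zt : Z t by rewrite /= Ft hP.
  have := min1 t Zt; rewrite -e2 le_eqVlt => /orP[/eqP eb|]; last exact: ratio1.
  have Z't : Z' t by apply/andP; split; [exact: Zt|rewrite -e2 eb].
  have := max2 t Z't; rewrite /= le_eqVlt => /orP[/eqP ei|li].
    by move: tt2; rewrite (inj _ _ (esym eb) ei) eqxx.
  by rewrite -eb; apply: ratio2; move: li; rewrite ltEnat.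
pose u := fun n => `|C| * (g P%:R P n / g (bt t2) (it t2) n) +
   \sum_(t | t != t2) `|F t| * (g (bt t) (it t) n / g (bt t2) (it t2) n).
have su : small u.
  apply: smallD; first by apply: smallZ => //; apply: ratio1; case/andP: Zt2.
  apply: small_sum => t tt2.
  have [->|Ft] := eqVneq (F t) 0.
    apply: (small_le _ (@small0 R)); exists 0%N => n _; by rewrite normr0 mul0r.
  exact: smallZ (claim t tt2 Ft).
have hb : exists N1, forall n, (N1 <= n)%N -> `|F t2| <= u n.
  exists (maxn N (N0 R)) => n; rewrite geq_max => /andP[hn1 hn2].
  have G2 := g_gt0 (bt t2) (it t2) hn2.
  rewrite -(ler_pM2r G2).
  have -> : u n * g (bt t2) (it t2) n = `|C| * g P%:R P n +
      \sum_(t | t != t2) `|F t| * g (bt t) (it t) n.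
    rewrite /u mulrDl mulr_suml -mulrA divfK ?gt_eqF //; congr (_ + _).
    by apply: eq_bigr => t _; rewrite -mulrA divfK ?gt_eqF.
  have := hS n hn1; rewrite (bigD1 t2) //= => hS'.
  set Sr := \sum_(t | t != t2) _ in hS'.
  have e : F t2 * g (bt t2) (it t2) n =
    (F t2 * g (bt t2) (it t2) n + Sr) - Sr by rewrite addrK.
  rewrite -[X in _ * X <= _](ger0_norm (ltW G2)) -normrM e.
  apply: le_trans (ler_normB _ _) _.
  apply: lerD; first exact: le_trans hS' (ler_wpM2r (ltW (g_gt0 _ _ hn2)) (ler_norm C)).
  apply: le_trans (ler_norm_sum _ _ _) _.
  by apply: ler_sum => t _; rewrite normrM (ger0_norm (ltW (g_gt0 _ _ hn2))).
have := small_ge su hb; rewrite normr_le0 => /eqP h.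
by move: Zt2; rewrite /= h eqxx.
Qed.

End U.
Local Open Scope complex_scope.
Section UC.
Variable R : realType.

Lemma Re_mulC (z : R[i]) (r : R) : complex.Re (z * r%:C) = complex.Re z * r.
Proof. by case: z => a b /=; rewrite mulr0 subr0. Qed.

Lemma Im_mulC (z : R[i]) (r : R) : complex.Im (z * r%:C) = complex.Im z * r.
Proof. by case: z => a b /=; rewrite mulr0 add0r. Qed.

Lemma norm_Re_le (z : R[i]) (r : R) : `|z| <= r%:C -> `|complex.Re z| <= r.
Proof.
rewrite normc_def lecR => h; apply: le_trans h.
rewrite -sqrtr_sqr ler_sqrt ?lerDl ?sqr_ge0 //.
by rewrite addr_ge0 ?sqr_ge0.
Qed.

Lemma norm_Im_le (z : R[i]) (r : R) : `|z| <= r%:C -> `|complex.Im z| <= r.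
Proof.
rewrite normc_def lecR => h; apply: le_trans h.
rewrite -sqrtr_sqr ler_sqrt ?lerDr ?sqr_ge0 //.
by rewrite addr_ge0 ?sqr_ge0.
Qed.

Lemma uniq_cplx (T : finType) (bt : T -> R) (it : T -> nat) (F : T -> R[i])
    (P : nat) (C : R) (N : nat) :
  (forall t t', bt t = bt t' -> it t = it t' -> t = t') ->
  (forall n, (N <= n)%N ->
     `|\sum_t F t * (g (bt t) (it t) n)%:C| <= (C * g P%:R P n)%:C) ->
  forall t, bt t < P%:R -> F t = 0.
Proof.
move=> inj hS t ht.
have hRe : complex.Re (F t) = 0.
  apply: (@uniq_real R T bt it (fun t => complex.Re (F t)) P C N inj) => // n hn.
  have := norm_Re_le (hS n hn); rewrite raddf_sum /=.
  by under eq_bigr do rewrite Re_mulC.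
have hIm : complex.Im (F t) = 0.
  apply: (@uniq_real R T bt it (fun t => complex.Im (F t)) P C N inj) => // n hn.
  have := norm_Im_le (hS n hn); rewrite raddf_sum /=.
  by under eq_bigr do rewrite Im_mulC.
by move: hRe hIm; case: (F t) => a b /= -> ->.
Qed.

End UC.
Local Open Scope complex_scope.
Section Box.
Variable R : realType.
Variable rho : R.
Hypothesis hr : forall r : rat, rho != ratr r.

Definition bb (k l : nat) : R := k%:R * rho + l%:R + 1.

Lemma bb_inj k l k' l' : bb k l = bb k' l' -> k = k' /\ l = l'.
Proof.
move=> e.
have [kk|nk] := eqVneq k k'.
  subst k'; split => //; move: e; rewrite /bb => /addIr /addrI /eqP.
  by rewrite eqr_nat => /eqP.
have d0 : (k%:R - k'%:R : R) != 0 by rewrite subr_eq0 eqr_nat.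
have e2 : (k%:R - k'%:R) * rho = l'%:R - l%:R.
  apply/eqP; rewrite -subr_eq0.
  have -> : (k%:R - k'%:R) * rho - (l'%:R - l%:R) = bb k l - bb k' l' by rewrite /bb; ring.
  by rewrite e subrr.
have e3 : rho = (l'%:R - l%:R) / (k%:R - k'%:R) by rewrite -e2 [X in X / _]mulrC mulfK.
have := hr ((l'%:Q - l%:Q) / (k%:Q - k'%:Q)).
by rewrite fmorph_div !rmorphB /= !ratr_nat -e3 eqxx.
Qed.

Definition boxT (B : nat) := ('I_B.+1 * 'I_B.+1 * 'I_B.+1)%type.

Lemma box_uniq (B P : nat) (Phi : boxT B -> R[i]) (C : R) (N : nat) :
  (forall n, (N <= n)%N ->
    `|\sum_(t : boxT B) Phi t * (g (bb t.1.1 t.1.2) t.2 n)%:C| <= (C * g P%:R P n)%:C) ->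
  forall t : boxT B, bb t.1.1 t.1.2 < P%:R -> Phi t = 0.
Proof.
move=> hS t ht.
apply: (@uniq_cplx R (boxT B) (fun t => bb t.1.1 t.1.2) (fun t => val t.2) Phi P C N) => //.
move=> [[a b] c] [[a' b'] c'] /= /bb_inj [e1 e2] e3.
by rewrite (val_inj e3) (val_inj e1) (val_inj e2).
Qed.

Definition pkey (B : nat) (x : nat * nat * nat) : boxT B :=
  ((inord x.1.1, inord x.1.2), inord x.2).

Lemma regroup (U : finType) (B : nat) (key : U -> nat * nat * nat) (F : U -> R[i]) (n : nat) :
  (forall u, ((key u).1.1 <= B)%N && ((key u).1.2 <= B)%N && ((key u).2 <= B)%N) ->
  \sum_u F u * (g (bb (key u).1.1 (key u).1.2) (key u).2 n)%:C =
  \sum_(t : boxT B) (\sum_(u | pkey B (key u) == t) F u) * (g (bb t.1.1 t.1.2) t.2 n)%:C.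
Proof.
move=> hk.
rewrite (partition_big (fun u => pkey B (key u)) predT) //=.
apply: eq_bigr => t _; rewrite mulr_suml; apply: eq_bigr => u /eqP <-.
have /andP[/andP[h1 h2] h3] := hk u.
by rewrite /pkey /= !inordK.
Qed.

End Box.
Local Open Scope complex_scope.
Section Od.
Variable R : realType.

Definition Od (f : nat -> R[i]) (P : nat) :=
  exists C : R, exists N : nat, forall n, (N <= n)%N -> `|f n| <= (C * g P%:R P n)%:C.

Lemma normCr (r : R) : `|r%:C| = `|r|%:C.
Proof. by rewrite normc_def /= expr0n /= addr0 sqrtr_sqr. Qed.

Lemma normC_real (z : R[i]) : exists r : R, `|z| = r%:C /\ 0 <= r.
Proof.
exists (Num.sqrt (complex.Re z ^+ 2 + complex.Im z ^+ 2)); split; first exact: normc_def.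
exact: sqrtr_ge0.
Qed.

Lemma Od0 P : Od (fun _ => 0) P.
Proof. by exists 0, 0%N => n _; rewrite normr0 mul0r. Qed.

Lemma OdD f1 f2 P : Od f1 P -> Od f2 P -> Od (fun n => f1 n + f2 n) P.
Proof.
move=> [C1 [N1 h1]] [C2 [N2 h2]]; exists (C1 + C2), (maxn N1 N2) => n.
rewrite geq_max => /andP[n1 n2].
apply: le_trans (ler_normD _ _) _.
by rewrite mulrDl rmorphD /=; apply: lerD; [apply: h1|apply: h2].
Qed.

Lemma OdZ (c : R[i]) f P : Od f P -> Od (fun n => c * f n) P.
Proof.
move=> [C [N h]]; have [r [hr r0]] := normC_real c.
exists (r * C), N => n hn.
rewrite normrM hr -mulrA rmorphM /=; apply: ler_wpM2l; first by rewrite ler0c.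
exact: h.
Qed.

Lemma OdN f P : Od f P -> Od (fun n => - f n) P.
Proof.
move=> h; have := OdZ (-1) h.
by congr Od; apply/funext => n; rewrite mulN1r.
Qed.

Lemma Od_le f h P : (exists N, forall n, (N <= n)%N -> `|f n| <= `|h n|) -> Od h P -> Od f P.
Proof.
move=> [N hN] [C [M hM]]; exists C, (maxn N M) => n.
rewrite geq_max => /andP[n1 n2]; exact: le_trans (hN n n1) (hM n n2).
Qed.

Lemma Od_ext f h P : (forall n, f n = h n) -> Od h P -> Od f P.
Proof. by move=> e; apply: Od_le; exists 0%N => n _; rewrite e. Qed.

Lemma Od_sumseq (I : Type) (s : seq I) (F : I -> nat -> R[i]) P :
  (forall i, Od (F i) P) -> Od (fun n => \sum_(i <- s) F i n) P.
Proof.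
move=> hF; elim: s => [|x s IH].
  by apply: Od_ext (Od0 P) => n; rewrite big_nil.
by apply: Od_ext (OdD (hF x) IH) => n; rewrite big_cons.
Qed.

Lemma Od_sum (T : finType) (p : pred T) (F : T -> nat -> R[i]) P :
  (forall t, p t -> Od (F t) P) -> Od (fun n => \sum_(t | p t) F t n) P.
Proof.
move=> hF; rewrite /index_enum; elim: (Finite.enum T) => [|x s IH].
  by apply: Od_ext (Od0 P) => n; rewrite big_nil.
case px : (p x).
  by apply: Od_ext (OdD (hF x px) IH) => n; rewrite big_cons px.
by apply: Od_ext IH => n; rewrite big_cons px.
Qed.

Lemma g_ge0 (b : R) (i n : nat) : 0 <= g b i n.
Proof.
rewrite /g divr_ge0 ?powR_ge0 //.
case: n => [|n]; first by rewrite ln0 // expr0n; case: i => //=.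
by apply: exprn_ge0; apply: ln_ge0; rewrite ler1n.
Qed.

Lemma g_shift (P n : nat) : (N0 R <= n)%N -> g (P%:R : R) P n.+1 <= 2 ^+ P * g (P%:R : R) P n.
Proof.
move=> hn.
have n2 : (2 <= n)%N by apply: leq_trans hn.
have n0 : (0 : R) < n%:R by rewrite ltr0n; apply: leq_trans n2.
have l1 := ln_ge1 hn.
rewrite /g mulrA -exprMn; apply: ler_pM.
- by apply: exprn_ge0; apply: ln_ge0; rewrite ler1n.
- by rewrite invr_ge0 powR_ge0.
- apply: lerXn2r; rewrite ?nnegrE ?ln_ge0 ?ler1n ?ln_le2 //.
  by rewrite mulr_ge0 // (le_trans ler01 l1).
- rewrite lef_pV2 ?posrE ?powR_gt0 ?ltr0n //.
  apply: ge0_ler_powR; rewrite ?nnegrE ?ler0n ?ler_nat //.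
  exact: leq_trans n2.
Qed.

Lemma Od_shift f P : Od f P -> Od (fun n => f n.+1) P.
Proof.
move=> [C [N h]]; exists (`|C| * 2 ^+ P), (maxn N (N0 R)) => n.
rewrite geq_max => /andP[n1 n2].
apply: le_trans (h n.+1 (leqW n1)) _; rewrite lecR -mulrA.
apply: le_trans (ler_wpM2r (g_ge0 _ _ _) (ler_norm C)) _.
by apply: ler_wpM2l => //; apply: g_shift.
Qed.

Lemma Od_g (b : R) (m P : nat) : P%:R <= b -> (m <= P)%N -> Od (fun n => (g b m n)%:C) P.
Proof.
move=> bP mP; exists 1, (N0 R) => n hn.
have n0 : (0 : R) < n%:R by rewrite ltr0n; apply: leq_trans hn.
have l1 := ln_ge1 hn.
rewrite normCr ger0_norm ?g_ge0 // lecR mul1r /g.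
apply: ler_pM.
- by apply: exprn_ge0; apply: le_trans ler01 l1.
- by rewrite invr_ge0 powR_ge0.
- exact: ler_weXn2l.
- rewrite lef_pV2 ?posrE ?powR_gt0 //.
  by apply: ler_powR => //; rewrite ler1n; apply: leq_trans hn.
Qed.

End Od.
Local Open Scope complex_scope.
Section Dl.
Variable R : realType.
Variables (S : seq step) (omega : step -> R) (tc : R).

Local Notation D := (Delta S omega tc).
Local Notation Di := (Delta_iter S omega tc).

Lemma ext0_lin (c : R[i]) (w1 w2 : nat -> nat -> R[i]) a b :
  ext0 (fun y1 y2 => c * w1 y1 y2 + w2 y1 y2) a b = c * ext0 w1 a b + ext0 w2 a b.
Proof. by rewrite /ext0; case: ifP; rewrite ?mulr0 ?addr0. Qed.

Lemma ext0_0 a b : ext0 (fun _ _ => 0 : R[i]) a b = 0.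
Proof. by rewrite /ext0; case: ifP. Qed.

Lemma Delta_lin (c : R[i]) (w1 w2 : nat -> nat -> R[i]) a b :
  D (fun y1 y2 => c * w1 y1 y2 + w2 y1 y2) a b = c * D w1 a b + D w2 a b.
Proof.
rewrite /Delta.
under eq_bigr => s _ do rewrite ext0_lin mulrDr mulrCA.
rewrite big_split /= -mulr_sumr.
set X := \sum_(s <- S) _; set Y := \sum_(s <- S) _.
ring.
Qed.

Lemma Delta_0 : D (fun _ _ => 0) = (fun _ _ => 0).
Proof.
apply/funext => a; apply/funext => b; rewrite /Delta big1 ?mulr0 ?subr0 //.
by move=> s _; rewrite ext0_0 mulr0.
Qed.

Lemma Delta_iter_0 r : Di r (fun _ _ => 0) = (fun _ _ => 0).
Proof. by elim: r => [|r IH] //; rewrite /Delta_iter iterS -/(Di r _) IH Delta_0. Qed.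

Lemma Delta_iter_lin r (c : R[i]) (w1 w2 : nat -> nat -> R[i]) :
  Di r (fun y1 y2 => c * w1 y1 y2 + w2 y1 y2) =
  (fun a b => c * Di r w1 a b + Di r w2 a b).
Proof.
elim: r => [|r IH] //.
rewrite /Delta_iter !iterS -!/(Di r _) IH.
by apply/funext => a; apply/funext => b; rewrite Delta_lin.
Qed.

Lemma Delta_iter_S r w : Di r.+1 w = Di r (D w).
Proof. by rewrite /Delta_iter iterSr. Qed.

Lemma Delta_iter_add r1 r2 w : Di (r1 + r2) w = Di r1 (Di r2 w).
Proof. by rewrite /Delta_iter iterD. Qed.

Lemma Delta_iter_kill (T : finType) (p : pred T) (c : T -> R[i])
    (f : T -> nat -> nat -> R[i]) r :
  (forall u, p u -> c u != 0 -> Di r (f u) = (fun _ _ => 0)) ->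
  Di r (fun a b => \sum_(u | p u) c u * f u a b) = (fun _ _ => 0).
Proof.
move=> hk; rewrite /index_enum; elim: (Finite.enum T) => [|x s IH].
  have -> : (fun a b => \sum_(u <- [::] | p u) c u * f u a b) = (fun _ _ => 0 : R[i]).
    by apply/funext => a; apply/funext => b; rewrite big_nil.
  exact: Delta_iter_0.
case px : (p x); last first.
  rewrite -IH; congr Di; apply/funext => a; apply/funext => b.
  by rewrite big_cons px.
have -> : (fun a b => \sum_(u <- x :: s | p u) c u * f u a b) =
   (fun a b => c x * f x a b + \sum_(u <- s | p u) c u * f u a b).
  by apply/funext => a; apply/funext => b; rewrite big_cons px.
rewrite Delta_iter_lin IH.
apply/funext => a; apply/funext => b.
have [->|cx] := eqVneq (c x) 0; first by rewrite mul0r addr0.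
by rewrite (hk x px cx) mulr0 addr0.
Qed.

Lemma Od_Delta (W : nat -> nat -> nat -> R[i]) P x1 x2 :
  (forall y1 y2, Od (W y1 y2) P) ->
  Od (fun n => D (fun y1 y2 => W y1 y2 n) x1 x2) P.
Proof.
move=> hW; rewrite /Delta.
apply: OdD; last exact: OdN (OdZ _ (hW x1 x2)).
apply: Od_sumseq => s; apply: OdZ.
case h : ((0 <= x1%:Z - s.1) && (0 <= x2%:Z - s.2))%R.
  by apply: Od_ext (hW `|x1%:Z - s.1|%N `|x2%:Z - s.2|%N) => n; rewrite /ext0 h.
by apply: Od_ext (Od0 _ P) => n; rewrite /ext0 h.
Qed.

End Dl.
Local Open Scope complex_scope.
Section Main1.
Variables (R : realType) (S : seq step) (omega : step -> R) (tc rho : R)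
  (q : nat -> nat -> nat -> R[i])
  (v : nat -> nat -> nat -> nat -> nat -> R[i]).
Hypotheses (htc : 0 < tc) (hrho : 0 < rho).
Hypothesis hirr : forall r : rat, rho != ratr r.
Hypothesis hrec : forall (x1 x2 n : nat),
     q x1 x2 n.+1 = \sum_(s <- S) (omega s)%:C *
                      ext0 (fun y1 y2 => q y1 y2 n) (x1%:Z - s.1) (x2%:Z - s.2).
Hypothesis hasym : forall p : R, 0 < p -> forall x1 x2 : nat,
     exists C : R, exists N : nat, forall n : nat, (N <= n)%N ->
       `| q x1 x2 n - ((tc ^- n)%:C * asym_sum rho p v x1 x2 n) |
         <= (C * tc ^- n * (ln (n%:R : R) / n%:R) `^ p)%:C.
Variable P : nat.
Hypothesis P0 : (0 < P)%N.

Definition KK := (Num.truncn ((P%:R : R) + P%:R / rho)).+1.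

Definition V (k l m : nat) : nat -> nat -> R[i] := fun x1 x2 =>
  if [&& (1 <= k)%N, (m <= l)%N & bb rho k l < P%:R] then v k l m x1 x2 else 0.

Definition U2 := ('I_KK * 'I_KK * 'I_KK)%type.

Definition A (x1 x2 n : nat) : R[i] :=
  \sum_(u : U2) V u.1.1 u.1.2 u.2 x1 x2 * (g (bb rho u.1.1 u.1.2) u.2 n)%:C.

Definition E (x1 x2 n : nat) : R[i] := (tc ^+ n)%:C * q x1 x2 n.

Lemma bb_lt_K k l : bb rho k l < P%:R -> (k < KK)%N /\ (l < KK)%N.
Proof.
move=> h.
have hK : (P%:R : R) + P%:R / rho < KK%:R by exact: truncnS_gt.
have pr0 : 0 <= (P%:R : R) / rho by rewrite divr_ge0 // ltW.
have l0 : (0 : R) <= l%:R by rewrite ler0n.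
have P0' : (0 : R) <= P%:R by rewrite ler0n.
have kr0 : 0 <= k%:R * rho by rewrite mulr_ge0 ?ler0n // ltW.
have kr : k%:R * rho < P%:R by move: h; rewrite /bb; lra.
have kr' : k%:R < P%:R / rho by rewrite ltr_pdivlMr.
split; rewrite -(ltr_nat R).
  lra.
move: h; rewrite /bb; lra.
Qed.


Lemma asym_eq x1 x2 n : asym_sum rho P%:R v x1 x2 n = A x1 x2 n.
Proof.
have inner : forall (l : 'I_KK) (c : bool) (f : nat -> R[i]),
    \sum_(m < l.+1 | c) f m = \sum_(m < KK) (if (m <= l)%N && c then f m else 0).
  move=> l c f; rewrite big_mkcond (big_ord_widen KK (fun m => if c then f m else 0)) //.
  rewrite big_mkcond; apply: eq_bigr => m _; rewrite ltnS; by case: (m <= l)%N.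
rewrite /asym_sum /A -/KK.
under eq_bigr => k _ do under eq_bigr => l _ do
  rewrite (inner l _ (fun m : nat => v k l m x1 x2 *
     ((ln (n%:R : R)) ^+ m / (n%:R : R) `^ (k%:R * rho + l%:R + 1))%:C)).
rewrite pair_big pair_big /=.
apply: eq_bigr => [[[k l] m] _] /=.
rewrite /V /g /bb.
by case: (1 <= k)%N; case: (m <= l)%N; case: (_ < _) => /=; rewrite ?mul0r.
Qed.

Lemma ext0_scale (c : R[i]) (w : nat -> nat -> R[i]) a b :
  ext0 (fun y1 y2 => c * w y1 y2) a b = c * ext0 w a b.
Proof. by rewrite /ext0; case: ifP; rewrite ?mulr0. Qed.

Lemma E_rec x1 x2 n :
  E x1 x2 n.+1 = E x1 x2 n + tc%:C * Delta S omega tc (fun y1 y2 => E y1 y2 n) x1 x2.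
Proof.
rewrite /E hrec /Delta.
under [X in _ = _ + _ * (X - _)]eq_bigr => s _ do rewrite ext0_scale mulrCA.
rewrite -mulr_sumr.
set X := \sum_(s <- S) _.
have tc0 : tc%:C != 0 :> R[i] by apply/eqP => -[] /eqP; rewrite gt_eqF.
rewrite exprS rmorphM /= fmorphV /=.
by field.
Qed.


Lemma Err_Od x1 x2 : Od (fun n => E x1 x2 n - A x1 x2 n) P.
Proof.
have P0' : (0 : R) < P%:R by rewrite ltr0n.
have [C [N h]] := hasym P0' x1 x2.
exists C, (maxn N 1) => n; rewrite geq_max => /andP[n1 n2].
have := h n n1; rewrite asym_eq.
have tn : tc ^+ n != 0 by rewrite expf_neq0 // gt_eqF.
have e : E x1 x2 n - A x1 x2 n = (tc ^+ n)%:C * (q x1 x2 n - (tc ^- n)%:C * A x1 x2 n).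
  by rewrite /E mulrBr mulrA -rmorphM /= mulfV // mul1r.
rewrite e normrM normCr (ger0_norm (exprn_ge0 n (ltW htc))) => hb.
apply: le_trans (ler_wpM2l _ hb) _; first by rewrite ler0c exprn_ge0 // ltW.
rewrite -rmorphM lecR /=.
have n0 : (0 : R) < n%:R by rewrite ltr0n.
have l0 : 0 <= ln (n%:R : R) by rewrite ln_ge0 // ler1n.
rewrite powR_mulrn ?divr_ge0 ?ler0n // /g powR_mulrn ?ler0n // expr_div_n.
set Y := ln (n%:R : R) ^+ P / n%:R ^+ P.
have -> : tc ^+ n * (C * tc ^- n * Y) = C * Y by field.
exact: lexx.
Qed.


Lemma Delta_sum (T : finType) (c : T -> R[i]) (f : T -> nat -> nat -> R[i]) a b :
  Delta S omega tc (fun y1 y2 => \sum_t c t * f t y1 y2) a b =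
  \sum_t c t * Delta S omega tc (f t) a b.
Proof.
rewrite /index_enum; elim: (Finite.enum T) => [|x s IH].
  have -> : (fun y1 y2 => \sum_(t <- [::]) c t * f t y1 y2) = (fun _ _ => 0 : R[i]).
    by apply/funext => y1; apply/funext => y2; rewrite big_nil.
  by rewrite Delta_0 big_nil.
have -> : (fun y1 y2 => \sum_(t <- x :: s) c t * f t y1 y2) =
   (fun y1 y2 => c x * f x y1 y2 + \sum_(t <- s) c t * f t y1 y2).
  by apply/funext => y1; apply/funext => y2; rewrite big_cons.
by rewrite Delta_lin IH big_cons.
Qed.

Definition Err (x1 x2 n : nat) := E x1 x2 n - A x1 x2 n.

Definition TT0 (x1 x2 n : nat) : R[i] :=
  A x1 x2 n.+1 - A x1 x2 n - tc%:C * Delta S omega tc (fun y1 y2 => A y1 y2 n) x1 x2.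

Lemma TT0_Od x1 x2 : Od (TT0 x1 x2) P.
Proof.
have hE : forall y1 y2, Od (Err y1 y2) P by move=> y1 y2; exact: Err_Od.
have h := OdD (OdD (OdN (Od_shift (hE x1 x2))) (hE x1 x2)) (OdZ tc%:C (@Od_Delta R S omega tc Err P x1 x2 hE)).
apply: Od_ext h => n.
have e1 : (fun y1 y2 => E y1 y2 n) = (fun y1 y2 => 1 * A y1 y2 n + Err y1 y2 n).
  by apply/funext => y1; apply/funext => y2; rewrite /Err mul1r addrC subrK.
have := E_rec x1 x2 n; rewrite e1 Delta_lin mul1r => er.
rewrite /TT0 /Err er.
set D1 := Delta _ _ _ _ x1 x2; set D2 := Delta _ _ _ _ x1 x2.
ring.
Qed.


Definition BB := (KK + P)%N.
Definition U1 := (U2 * 'I_P.+1 * 'I_KK)%type.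
Definition key2 (u : U2) : nat * nat * nat := (u.1.1 : nat, u.1.2 : nat, u.2 : nat).
Definition key1 (w : U1) : nat * nat * nat :=
  (w.1.1.1.1 : nat, (w.1.1.1.2 + w.1.2)%N, w.2 : nat).
Definition cf (w : U1) : R := cc (bb rho w.1.1.1.1 w.1.1.1.2) w.1.1.2 w.1.2 w.2.
Definition F1 x1 x2 (w : U1) : R[i] := V w.1.1.1.1 w.1.1.1.2 w.1.1.2 x1 x2 * (cf w)%:C.
Definition F2 x1 x2 (u : U2) : R[i] :=
  - (tc%:C * Delta S omega tc (V u.1.1 u.1.2 u.2) x1 x2).
Definition errt (u : U2) (n : nat) : R[i] :=
  (g (bb rho u.1.1 u.1.2) u.2 n.+1 - g (bb rho u.1.1 u.1.2) u.2 n -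
   \sum_(j < P.+1) \sum_(i < KK) cc (bb rho u.1.1 u.1.2) u.2 j i *
       g (bb rho u.1.1 u.1.2 + j%:R) i n)%:C.

Lemma bbD k l j : bb rho k (l + j) = bb rho k l + j%:R.
Proof. by rewrite /bb natrD; ring. Qed.

Lemma bb_ge0 k l : 0 <= bb rho k l.
Proof. by rewrite /bb !addr_ge0 ?ler01 ?ler0n // mulr_ge0 ?ler0n // ltW. Qed.

Lemma errt_Od x1 x2 : Od (fun n => \sum_(u : U2) V u.1.1 u.1.2 u.2 x1 x2 * errt u n) P.
Proof.
apply: Od_sum => u _.
case hV: (V u.1.1 u.1.2 u.2 x1 x2 == 0).
  by move/eqP: hV => ->; apply: Od_ext (Od0 _ P) => n; rewrite mul0r.
apply: OdZ.
move: hV; rewrite /V; case: ifP => [/and3P[k1 ml hb] _|]; last by rewrite eqxx.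
have lP : (u.1.2 < P)%N.
  have kr0 : 0 <= (u.1.1)%:R * rho by rewrite mulr_ge0 ?ler0n // ltW.
  by rewrite -(ltr_nat R); move: hb; rewrite /bb; lra.
have mK : (u.2 < KK)%N by [].
have [C hC] := expand P (bb_ge0 u.1.1 u.1.2) mK.
have hg : Od (fun n => (g (bb rho u.1.1 u.1.2 + P.+1%:R) u.2 n)%:C) P.
  apply: Od_g; last by apply: leq_trans ml (ltnW lP).
  by rewrite -[leLHS]add0r lerD ?bb_ge0 // ler_nat.
apply: Od_le (OdZ (C%:C) hg).
exists (N0 R) => n hn; rewrite /errt -rmorphM !normCr lecR.
exact: le_trans (hC n hn) (ler_norm _).
Qed.

Lemma flat1 x1 x2 n :
  \sum_(u : U2) V u.1.1 u.1.2 u.2 x1 x2 *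
    (\sum_(j < P.+1) \sum_(i < KK) (cc (bb rho u.1.1 u.1.2) u.2 j i)%:C *
       (g (bb rho u.1.1 u.1.2 + j%:R) i n)%:C) =
  \sum_(w : U1) F1 x1 x2 w * (g (bb rho (key1 w).1.1 (key1 w).1.2) (key1 w).2 n)%:C.
Proof.
under eq_bigr do rewrite mulr_sumr.
under eq_bigr do under eq_bigr do rewrite mulr_sumr.
rewrite pair_big pair_big /=.
apply: eq_bigr => [[[u j] i] _] /=.
by rewrite /F1 /cf /= bbD mulrA.
Qed.


Lemma decomp x1 x2 n :
  \sum_(w : U1) F1 x1 x2 w * (g (bb rho (key1 w).1.1 (key1 w).1.2) (key1 w).2 n)%:C +
  \sum_(u : U2) F2 x1 x2 u * (g (bb rho (key2 u).1.1 (key2 u).1.2) (key2 u).2 n)%:C =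
  TT0 x1 x2 n - \sum_(u : U2) V u.1.1 u.1.2 u.2 x1 x2 * errt u n.
Proof.
rewrite -flat1.
have h1 : A x1 x2 n.+1 - A x1 x2 n =
    \sum_(u : U2) V u.1.1 u.1.2 u.2 x1 x2 *
    (\sum_(j < P.+1) \sum_(i < KK) (cc (bb rho u.1.1 u.1.2) u.2 j i)%:C *
       (g (bb rho u.1.1 u.1.2 + j%:R) i n)%:C) +
    \sum_(u : U2) V u.1.1 u.1.2 u.2 x1 x2 * errt u n.
  rewrite /A -sumrB -big_split; apply: eq_bigr => u _ /=.
  rewrite -mulrBr -mulrDr; congr (_ * _).
  rewrite /errt !rmorphB /=.
  set Z := (\sum_(j < P.+1) _)%:C.
  have -> : Z = \sum_(j < P.+1) \sum_(i < KK) (cc (bb rho u.1.1 u.1.2) u.2 j i)%:C *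
       (g (bb rho u.1.1 u.1.2 + j%:R) i n)%:C.
    rewrite /Z raddf_sum; apply: eq_bigr => j _.
    rewrite raddf_sum; apply: eq_bigr => i _ /=.
    by rewrite rmorphM.
  by rewrite [RHS]addrC subrK.
have h2 : \sum_(u : U2) F2 x1 x2 u * (g (bb rho (key2 u).1.1 (key2 u).1.2) (key2 u).2 n)%:C =
    - (tc%:C * Delta S omega tc (fun y1 y2 => A y1 y2 n) x1 x2).
  have -> : (fun y1 y2 => A y1 y2 n) = (fun y1 y2 => \sum_(u : U2)
      (g (bb rho u.1.1 u.1.2) u.2 n)%:C * V u.1.1 u.1.2 u.2 y1 y2).
    by apply/funext => y1; apply/funext => y2; apply: eq_bigr => u _; rewrite mulrC.
  rewrite Delta_sum mulr_sumr -sumrN; apply: eq_bigr => u _.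
  by rewrite /F2 /key2 /=; ring.
rewrite h2 /TT0 h1.
set X1 := \sum_(u : U2) _ * (\sum_(j < P.+1) _).
set X2 := \sum_(u : U2) _ * errt u n.
set D := Delta _ _ _ _ x1 x2.
ring.
Qed.

Lemma main_Od x1 x2 :
  Od (fun n => \sum_(t : boxT BB)
     ((\sum_(w : U1 | pkey BB (key1 w) == t) F1 x1 x2 w) +
      (\sum_(u : U2 | pkey BB (key2 u) == t) F2 x1 x2 u)) *
     (g (bb rho t.1.1 t.1.2) t.2 n)%:C) P.
Proof.
apply: Od_ext (OdD (TT0_Od x1 x2) (OdN (errt_Od x1 x2))) => n.
rewrite -decomp.
rewrite (@regroup R rho U1 BB key1 (F1 x1 x2) n); last first.
  move=> [[[[k l] m] j] i] /=; rewrite /BB.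
  apply/andP; split; first (apply/andP; split).
  - by apply: leq_trans (ltnW (ltn_ord k)) (leq_addr _ _).
  - by apply: leq_add; [exact: ltnW (ltn_ord l)| rewrite -ltnS].
  - by apply: leq_trans (ltnW (ltn_ord i)) (leq_addr _ _).
rewrite (@regroup R rho U2 BB key2 (F2 x1 x2) n); last first.
  move=> [[k l] m] /=; rewrite /BB.
  by rewrite !(leq_trans (ltnW (ltn_ord _)) (leq_addr _ _)).
by rewrite -big_split /=; apply: eq_bigr => t _; rewrite mulrDl.
Qed.


Lemma relation x1 x2 (t : boxT BB) : bb rho t.1.1 t.1.2 < P%:R ->
  (\sum_(w : U1 | pkey BB (key1 w) == t) F1 x1 x2 w) +
  (\sum_(u : U2 | pkey BB (key2 u) == t) F2 x1 x2 u) = 0.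
Proof.
have [C [N h]] := main_Od x1 x2.
exact: (@box_uniq R rho hirr BB P _ C N h t).
Qed.

Lemma pkey_eq (x y : nat * nat * nat) :
  (x.1.1 <= BB)%N -> (x.1.2 <= BB)%N -> (x.2 <= BB)%N ->
  (y.1.1 <= BB)%N -> (y.1.2 <= BB)%N -> (y.2 <= BB)%N ->
  (pkey BB x == pkey BB y) = (x == y).
Proof.
case: x => [[a b] c]; case: y => [[a' b'] c'] /= ha hb hc ha' hb' hc'.
apply/eqP/eqP => [|-> //].
rewrite /pkey /= => -[e1 e2 e3].
have := congr1 val e1; have := congr1 val e2; have := congr1 val e3.
by rewrite /= !inordK // => -> -> ->.
Qed.

Lemma rel2 x1 x2 k l i : bb rho k l < P%:R -> (i < KK)%N ->
  tc%:C * Delta S omega tc (V k l i) x1 x2 =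
  \sum_(w : U1 | pkey BB (key1 w) == pkey BB (k, l, i)) F1 x1 x2 w.
Proof.
move=> hb iK; have [kK lK] := bb_lt_K hb.
have hB : forall z, (z < KK)%N -> (z <= BB)%N.
  by move=> z hz; apply: leq_trans (ltnW hz) (leq_addr _ _).
have := relation x1 x2 (t := pkey BB (k, l, i)).
rewrite /pkey /= !inordK ?ltnS ?hB // => /(_ hb).
rewrite (big_pred1 ((Ordinal kK, Ordinal lK), Ordinal iK)); last first.
  move=> [[a b] c] /=; rewrite -/(pkey BB (k, l, i)) -/(pkey BB (key2 ((a, b), c))).
  rewrite pkey_eq /= ?hB //.
rewrite /F2 /= => /eqP; rewrite addr_eq0 opprK => /eqP <-.
by [].
Qed.

Lemma V_eq k l m : V k l m =
  if [&& (1 <= k)%N, (m <= l)%N & bb rho k l < P%:R] then v k l m else (fun _ _ => 0).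
Proof. by apply/funext => y1; apply/funext => y2; rewrite /V; case: ifP. Qed.

Lemma polyh k : (1 <= k)%N -> forall l i, (i <= l)%N -> bb rho k l < P%:R ->
  Delta_iter S omega tc (l - i).+1 (V k l i) = (fun _ _ => 0).
Proof.
move=> k1 l; elim/ltn_ind: l => l IH i il hb.
have [kK lK] := bb_lt_K hb.
have iK : (i < KK)%N := leq_ltn_trans il lK.
have tc0 : tc%:C != 0 :> R[i] by apply/eqP => -[] /eqP; rewrite gt_eqF.
have hB : forall z, (z < KK)%N -> (z <= BB)%N.
  by move=> z hz; apply: leq_trans (ltnW hz) (leq_addr _ _).
rewrite Delta_iter_S.
have hD : Delta S omega tc (V k l i) = (fun y1 y2 =>
    \sum_(w : U1 | pkey BB (key1 w) == pkey BB (k, l, i))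
       ((tc%:C)^-1 * (cf w)%:C) * V w.1.1.1.1 w.1.1.1.2 w.1.1.2 y1 y2).
  apply/funext => y1; apply/funext => y2.
  apply: (mulfI tc0); rewrite rel2 // mulr_sumr; apply: eq_bigr => w _.
  by rewrite /F1 !mulrA mulfV // mul1r mulrC.
rewrite hD; apply: Delta_iter_kill => w sw cw.
move: w sw cw => [[[[kw lw] mw] j] iw] /= sw cw.
have cf0 : cf (((kw, lw), mw), j, iw) != 0.
  by apply: contraNneq cw => ->; rewrite mulr0.
move: cf0; rewrite /cf /cc /=; case: ifP => [/andP[j0 im] _|]; last by rewrite eqxx.
have b1 : (kw <= BB)%N by exact: hB.
have b2 : (lw + j <= BB)%N.
  by rewrite /BB; apply: leq_add; [exact: ltnW (ltn_ord lw)| rewrite -ltnS].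
have b3 : (iw <= BB)%N by exact: hB.
have b4 : (k <= BB)%N by exact: hB.
have b5 : (l <= BB)%N by exact: hB.
have b6 : (i <= BB)%N by exact: hB.
move: sw; rewrite pkey_eq //.
rewrite /key1 /= !xpair_eqE => /andP[/andP[/eqP ek /eqP el] /eqP ei].
move: im; rewrite ei => im.
case: (boolP [&& (1 <= kw)%N, (mw <= lw)%N & bb rho kw lw < P%:R]) => [/and3P[k1' mlw hbw]|hc];
  last by rewrite V_eq (negbTE hc) Delta_iter_0.
have lt : (lw < l)%N by rewrite -el -addn1 leq_add2l.
have := IH lw lt mw mlw; rewrite -ek => /(_ hbw) hI.
have -> : (l - i = (l - i - (lw - mw).+1) + (lw - mw).+1)%N.
  rewrite subnK //; rewrite -el; lia.
by rewrite Delta_iter_add hI Delta_iter_0.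
Qed.

End Main1.
Unset Implicit Arguments.
Local Open Scope complex_scope.

Theorem lemma4p5 (R : realType) (S : seq step) (omega : step -> R) (tc rho : R)
  (q : nat -> nat -> nat -> R[i])
  (v : nat -> nat -> nat -> nat -> nat -> R[i]) :
  uniq S ->
  (forall s, s \in S -> 0 < omega s) ->
  0 < tc ->
  0 < rho ->
  (forall r : rat, rho != ratr r) ->
  (forall (x1 x2 n : nat),
     q x1 x2 n.+1 = \sum_(s <- S) (omega s)%:C *
                      ext0 (fun y1 y2 => q y1 y2 n) (x1%:Z - s.1) (x2%:Z - s.2)) ->
  (forall p : R, 0 < p -> forall x1 x2 : nat,
     exists C : R, exists N : nat, forall n : nat, (N <= n)%N ->
       `| q x1 x2 n - ((tc ^- n)%:C * asym_sum rho p v x1 x2 n) |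
         <= (C * tc ^- n * (ln (n%:R : R) / n%:R) `^ p)%:C) ->
  forall k l m : nat, (1 <= k)%N -> (m <= l)%N ->
    forall x1 x2 : nat, Delta_iter S omega tc (l - m).+1 (v k l m) x1 x2 = 0.
Proof.
move=> uS hom htc hrho hirr hrec hasym k l m k1 ml x1 x2.
pose P := (Num.truncn (bb rho k l)).+1.
have hb : bb rho k l < P%:R by exact: truncnS_gt.
have P0 : (0 < P)%N by [].
have := polyh htc hrho hirr hrec hasym P0 k1 ml hb.
rewrite V_eq k1 ml hb /=.
by move=> /(congr1 (fun f => f x1 x2)).
Qed.
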